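(* Let $n$ be a positive integer, let $m$ be a real number with $7n^{3/5}\leq m\leq n$, and let $T\geq 0$ be an integer. Suppose that for every set $\Sigma'\subset[n]$ with $|\Sigma'|\geq m-7n^{3/5}$, every permutation of $\Sigma'$ contains a pair of close twins of length at least $T$. Then for every set $\Sigma\subset[n]$ with $|\Sigma|\geq m$, every permutation of $\Sigma$ contains a pair of close twins of length at least $T+n^{1/5}$.
   Context: A permutation of a finite set $\Sigma\subset\mathbb{N}$ is a sequence in which every element of $\Sigma$ appears exactly once; a subpermutation of a permutation is a subsequence of it. Two sequences $(a_1,\dots,a_L)$ and $(b_1,\dots,b_L)$ of distinct numbers are order-isomorphic if for all $i,j$: $a_i<a_j \iff b_i<b_j$. Two subpermutations of a permutation are called twins if they are order-isomorphic and disjoint (share no symbol); their length is their common number of entries. For a fixed $n$, twins $(a_1,\dots,a_L)$ and $(b_1,\dots,b_L)$ (where $a_i$ corresponds to $b_i$) are called close if $|b_i-a_i|\leq n^{2/5}$ for all $i$. The empty pair of subpermutations counts as close twins of length $0$. *)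

(* Defs.v *)
From Stdlib Require Import Reals List Permutation.
Import ListNotations.
Open Scope R_scope.

Inductive subseq : list nat -> list nat -> Prop :=
| subseq_nil : subseq [] []
| subseq_skip : forall x s t, subseq s t -> subseq s (x :: t)
| subseq_take : forall x s t, subseq s t -> subseq (x :: s) (x :: t).

Definition order_iso (a b : list nat) : Prop :=
  length a = length b /\
  forall i j, (i < length a)%nat -> (j < length a)%nat ->
    ((nth i a 0 < nth j a 0)%nat <-> (nth i b 0 < nth j b 0)%nat).

Definition twins (p a b : list nat) : Prop :=
  subseq a p /\ subseq b p /\ order_iso a b /\
  (forall x, In x a -> ~ In x b).

Definition close_twins (n : nat) (p a b : list nat) : Prop :=
  twins p a b /\
  forall i, (i < length a)%nat ->
    Rabs (INR (nth i b 0%nat) - INR (nth i a 0%nat)) <= Rpower (INR n) (2/5).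

Definition has_close_twins_len_ge (n : nat) (p : list nat) (x : R) : Prop :=
  exists a b, close_twins n p a b /\ INR (length a) >= x.

Definition subset_of_n (n : nat) (Sigma : list nat) : Prop :=
  NoDup Sigma /\ forall x, In x Sigma -> (1 <= x <= n)%nat.

(* Main.v *)
Require Import Defs.
From Stdlib Require Import Reals List Permutation Lia Lra Sorted Arith Bool ZArith.
Import ListNotations.
Open Scope nat_scope.


Lemma subseq_nil_l : forall l, subseq [] l.
Proof. induction l; constructor; auto. Qed.

Lemma subseq_app : forall a l b l', subseq a l -> subseq b l' -> subseq (a++b) (l++l').
Proof. intros a l b l' H H'; induction H; simpl; auto.
  - apply subseq_skip; auto.
  - apply subseq_take; auto. Qed.

Lemma subseq_in : forall a l x, subseq a l -> In x a -> In x l.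
Proof. intros a l x H; induction H; simpl; intuition. Qed.

Lemma subseq_trans : forall a b c, subseq a b -> subseq b c -> subseq a c.
Proof.
  intros a b c H1 H2; revert a H1; induction H2; intros a H1.
  - inversion H1; subst; constructor.
  - apply subseq_skip; auto.
  - inversion H1; subst.
    + apply subseq_skip; auto.
    + apply subseq_take; auto.
Qed.

Lemma subseq_filter : forall f l, subseq (filter f l) l.
Proof. intros f l; induction l; simpl; [constructor|]. destruct (f a); [apply subseq_take|apply subseq_skip]; auto. Qed.

Fixpoint idx (x : nat) (l : list nat) : nat :=
  match l with [] => 0 | y :: r => if Nat.eqb x y then 0 else S (idx x r) end.

Lemma idx_spec : forall l x, In x l -> idx x l < length l /\ nth (idx x l) l 0 = x.
Proof.
  induction l; simpl; intros x H; [contradiction|].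
  destruct (Nat.eqb_spec x a); subst; [split; auto; lia|].
  destruct H as [H|H]; [congruence|]. destruct (IHl x H); split; auto; lia.
Qed.

Lemma idx_inj : forall l x y, In x l -> In y l -> idx x l = idx y l -> x = y.
Proof.
  intros l x y Hx Hy E. destruct (idx_spec l x Hx), (idx_spec l y Hy). congruence.
Qed.

Lemma ss_idx_tail : forall y P l, (forall z, In z l -> z <> y) ->
  StronglySorted (fun x y0 => idx x (y::P) < idx y0 (y::P)) l ->
  StronglySorted (fun x y0 => idx x P < idx y0 P) l.
Proof.
  intros y P l Hall Hs. induction Hs; constructor.
  - apply IHHs. intros z Hz; apply Hall; simpl; auto.
  - rewrite Forall_forall in *. intros z Hz. specialize (H z Hz). simpl in H.
    destruct (Nat.eqb_spec a y); [exfalso; apply (Hall a); simpl; auto|].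
    destruct (Nat.eqb_spec z y); [exfalso; apply (Hall z); simpl; auto|]. lia.
Qed.

Lemma sorted_pos_subseq : forall P l, (forall x, In x l -> In x P) ->
  StronglySorted (fun x y => idx x P < idx y P) l -> subseq l P.
Proof.
  induction P as [|y P IH]; intros l Hin Hs.
  - destruct l; [constructor|]. exfalso; apply (Hin n); simpl; auto.
  - destruct l as [|x l]; [apply subseq_nil_l|].
    inversion Hs; subst.
    assert (Hne : forall z, In z l -> z <> x).
    { intros z Hz E; rewrite E in Hz. assert (Hlt := proj1 (Forall_forall _ _) H2 x Hz). simpl in Hlt. lia. }
    destruct (Nat.eqb_spec x y).
    + subst y. apply subseq_take. apply IH.
      * intros z Hz. destruct (Hin z (or_intror Hz)); [|auto]. exfalso; apply (Hne z Hz); auto.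
      * apply (ss_idx_tail x); auto.
    + apply subseq_skip. apply IH.
      * intros z Hz. destruct (Hin z Hz) as [E|]; [|auto]. rewrite <- E in Hz. exfalso.
        destruct Hz as [Hz|Hz]; [congruence|].
        assert (Hlt := proj1 (Forall_forall _ _) H2 y Hz). simpl in Hlt.
        rewrite Nat.eqb_refl in Hlt; lia.
      * apply (ss_idx_tail y); auto.
        intros z Hz E; rewrite E in Hz. destruct Hz as [Hz|Hz]; [congruence|].
        assert (Hlt := proj1 (Forall_forall _ _) H2 y Hz). simpl in Hlt.
        rewrite Nat.eqb_refl in Hlt; lia.
Qed.

Lemma order_iso_app : forall a1 b1 a2 b2, order_iso a1 b1 -> order_iso a2 b2 ->
  (forall i j, i < length a1 -> j < length a2 ->
     (nth i a1 0 < nth j a2 0 <-> nth i b1 0 < nth j b2 0) /\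
     (nth j a2 0 < nth i a1 0 <-> nth j b2 0 < nth i b1 0)) ->
  order_iso (a1++a2) (b1++b2).
Proof.
  intros a1 b1 a2 b2 [L1 H1] [L2 H2] Hc. split; [rewrite !length_app; lia|].
  intros i j Hi Hj. rewrite length_app in Hi, Hj.
  destruct (Nat.lt_ge_cases i (length a1)), (Nat.lt_ge_cases j (length a1)).
  - rewrite !app_nth1 by lia. apply H1; auto.
  - rewrite (app_nth1 a1) by lia. rewrite (app_nth1 b1) by lia.
    rewrite (app_nth2 a1) by lia. rewrite (app_nth2 b1) by lia. rewrite <- L1.
    apply Hc; lia.
  - rewrite (app_nth2 a1) by lia. rewrite (app_nth2 b1) by lia.
    rewrite (app_nth1 a1) by lia. rewrite (app_nth1 b1) by lia. rewrite <- L1.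
    apply Hc; lia.
  - rewrite !app_nth2 by lia. rewrite <- L1. apply H2; lia.
Qed.


Section Mir.
Variable A : Type.
Variable eqd : forall x y : A, {x = y} + {x <> y}.

Lemma argmax_ex : forall (f : A -> nat) l, l <> [] -> exists z, In z l /\ forall y, In y l -> f y <= f z.
Proof.
  intros f l; induction l as [|a l IH]; intros H; [congruence|].
  destruct l as [|b l'].
  - exists a; simpl; split; auto. intros y [->|[]]; lia.
  - destruct IH as [z [Hz Hm]]; [congruence|].
    destruct (Nat.le_gt_cases (f a) (f z)).
    + exists z; split; [simpl; auto|]. intros y [->|Hy]; auto.
    + exists a; split; [simpl; auto|]. intros y [->|Hy]; auto. specialize (Hm y Hy); lia.
Qed.

Lemma argmin_ex : forall (f : A -> nat) l, l <> [] -> exists z, In z l /\ forall y, In y l -> f z <= f y.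
Proof.
  intros f l; induction l as [|a l IH]; intros H; [congruence|].
  destruct l as [|b l'].
  - exists a; simpl; split; auto. intros y [->|[]]; lia.
  - destruct IH as [z [Hz Hm]]; [congruence|].
    destruct (Nat.le_gt_cases (f z) (f a)).
    + exists z; split; [simpl; auto|]. intros y [->|Hy]; auto.
    + exists a; split; [simpl; auto|]. intros y [->|Hy]; auto. specialize (Hm y Hy); lia.
Qed.

Definition injon (f : A -> nat) (X : list A) := forall x y, In x X -> In y X -> f x = f y -> x = y.
Definition chainP (f g : A -> nat) (Y : list A) := forall x y, In x Y -> In y Y -> f x < f y -> g x < g y.
Definition antiP (f g : A -> nat) (Y : list A) := forall x y, In x Y -> In y Y -> f x < f y -> g y < g x.

Variables f g : A -> nat.

Definition dom (x y : A) := (f x <? f y) && (g x <? g y).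
Definition maxb (X : list A) (x : A) := negb (existsb (dom x) X).

Lemma maxb_false : forall X x, maxb X x = false -> exists y, In y X /\ f x < f y /\ g x < g y.
Proof.
  intros X x H. unfold maxb in H. apply negb_false_iff in H. apply existsb_exists in H.
  destruct H as [y [Hy Hd]]. unfold dom in Hd. apply andb_true_iff in Hd. destruct Hd.
  exists y; repeat split; auto; apply Nat.ltb_lt; auto.
Qed.

Lemma maxb_true : forall X x y, maxb X x = true -> In y X -> f x < f y -> g x < g y -> False.
Proof.
  intros X x y H Hy H1 H2. unfold maxb in H. apply negb_true_iff in H.
  assert (existsb (dom x) X = true); [|congruence].
  apply existsb_exists. exists y; split; auto. unfold dom. apply andb_true_iff; split; apply Nat.ltb_lt; auto.
Qed.

Lemma max_above : forall X w, In w X -> exists z, In z X /\ maxb X z = true /\ (z = w \/ (f w < f z /\ g w < g z)).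
Proof.
  intros X w Hw.
  set (S := filter (fun y => if eqd y w then true else dom w y) X).
  assert (HS : S <> []).
  { intros E. assert (In w S). { apply filter_In; split; auto. destruct (eqd w w); auto. }
    rewrite E in H; contradiction. }
  destruct (argmax_ex f S HS) as [z [Hz Hm]].
  apply filter_In in Hz. destruct Hz as [HzX Hzw].
  assert (Hzw' : z = w \/ (f w < f z /\ g w < g z)).
  { destruct (eqd z w); auto. right. unfold dom in Hzw. apply andb_true_iff in Hzw.
    destruct Hzw; split; apply Nat.ltb_lt; auto. }
  exists z; split; auto; split; auto.
  destruct (maxb X z) eqn:E; auto. exfalso.
  destruct (maxb_false X z E) as [y [Hy [H1 H2]]].
  assert (In y S).
  { apply filter_In; split; auto. destruct (eqd y w); auto. unfold dom.
    destruct Hzw' as [->|[H3 H4]]; apply andb_true_iff; split; apply Nat.ltb_lt; lia. }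
  specialize (Hm y H); lia.
Qed.

Lemma filter_length_split : forall (h : A -> bool) l, length l = length (filter h l) + length (filter (fun x => negb (h x)) l).
Proof. intros h l; induction l; simpl; auto. destruct (h a); simpl; lia. Qed.

Lemma mirsky : forall s r (X : list A), NoDup X -> injon f X -> injon g X -> r * s < length X ->
  exists Y, NoDup Y /\ incl Y X /\ ((S r <= length Y /\ chainP f g Y) \/ (S s <= length Y /\ antiP f g Y)).
Proof.
  intros s r; induction r as [|r IH]; intros X Hnd Hf Hg Hl.
  - destruct X as [|x X]; [simpl in Hl; lia|].
    exists [x]; split; [constructor; auto; constructor|]. split; [intros y [->|[]]; simpl; auto|].
    left; split; simpl; auto. intros a b [->|[]] [->|[]]; lia.
  - set (M := filter (maxb X) X).
    destruct (Nat.le_gt_cases (S s) (length M)) as [HM|HM].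
    + exists M; split; [apply NoDup_filter; auto|]. split; [intros y Hy; apply filter_In in Hy; tauto|].
      right; split; auto. intros x y Hx Hy Hxy. apply filter_In in Hx, Hy.
      destruct Hx as [HxX Hx], Hy as [HyX Hy].
      destruct (Nat.lt_trichotomy (g x) (g y)) as [H|[H|H]]; auto.
      * exfalso; apply (maxb_true X x y Hx HyX Hxy H).
      * assert (x = y) by (apply Hg; auto). subst; lia.
    + set (X' := filter (fun x => negb (maxb X x)) X).
      assert (HX' : r * s < length X').
      { pose proof (filter_length_split (maxb X) X). fold M X' in H. simpl in Hl. lia. }
      assert (HinX' : incl X' X) by (intros y Hy; apply filter_In in Hy; tauto).
      destruct (IH X') as [Y [HndY [HiY [[HlY HcY]|[HlY HaY]]]]].
      * apply NoDup_filter; auto.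
      * intros a b Ha Hb; apply Hf; auto.
      * intros a b Ha Hb; apply Hg; auto.
      * auto.
      * assert (HYne : Y <> []) by (intros E; subst; simpl in HlY; lia).
        destruct (argmax_ex f Y HYne) as [w [HwY Hwm]].
        assert (HwX' := HiY w HwY). apply filter_In in HwX'. destruct HwX' as [HwX Hwn].
        destruct (max_above X w HwX) as [z [HzX [Hzm Hzw]]].
        assert (Hzw2 : f w < f z /\ g w < g z).
        { destruct Hzw as [->|H]; auto. rewrite Hzm in Hwn; discriminate. }
        assert (HzY : ~ In z Y).
        { intros HzY. apply HiY in HzY. apply filter_In in HzY. rewrite Hzm in HzY. destruct HzY; discriminate. }
        assert (Hbelow : forall u, In u Y -> f u < f z /\ g u < g z).
        { intros u Hu. destruct (Nat.lt_trichotomy (f u) (f w)) as [H|[H|H]].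
          - specialize (HcY u w Hu HwY H). lia.
          - assert (u = w) by (apply Hf; auto). subst; lia.
          - specialize (Hwm u Hu); lia. }
        exists (z :: Y). split; [constructor; auto|]. split.
        { intros y [<-|Hy]; auto. }
        left. split; [simpl; lia|].
        intros x y [<-|Hx] [<-|Hy] Hxy; try lia.
        -- specialize (Hbelow y Hy); lia.
        -- specialize (Hbelow x Hx); lia.
        -- apply HcY; auto.
      * exists Y; split; auto; split; [intros y Hy; apply HinX'; auto|]. right; auto.
Qed.

Lemma sort_ex : forall (F : A -> nat) (Z : list A), NoDup Z -> injon F Z ->
  exists Zs, Permutation Z Zs /\ StronglySorted (fun x y => F x < F y) Zs.
Proof.
  intros F. intros Z; remember (length Z) as len eqn:E. revert Z E.
  induction len as [len IH] using lt_wf_ind. intros Z E Hnd Hinj.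
  destruct Z as [|a Z0].
  - exists []; split; constructor.
  - assert (Hne : a :: Z0 <> []) by congruence.
    destruct (argmin_ex F _ Hne) as [mm [Hm Hmin]].
    set (R := filter (fun y => if eqd y mm then false else true) (a::Z0)).
    assert (HRl : length R < len).
    { subst len. pose proof (filter_length_split (fun y => if eqd y mm then false else true) (a::Z0)).
      fold R in H. assert (In mm (filter (fun x => negb (if eqd x mm then false else true)) (a::Z0))).
      { apply filter_In; split; auto. destruct (eqd mm mm); auto. }
      destruct (filter (fun x => negb (if eqd x mm then false else true)) (a :: Z0)); [contradiction|].
      simpl in H |- *. lia. }
    assert (HRnd : NoDup R) by (apply NoDup_filter; auto).
    destruct (IH (length R) HRl R eq_refl HRnd) as [Rs [HRp HRs]].
    { intros x y Hx Hy; apply filter_In in Hx, Hy; apply Hinj; tauto. }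
    exists (mm :: Rs). split.
    + apply NoDup_Permutation; auto.
      * constructor; [|eapply Permutation_NoDup; eauto].
        intros Hin. apply (Permutation_in _ (Permutation_sym HRp)) in Hin.
        apply filter_In in Hin. destruct (eqd mm mm); destruct Hin; [discriminate|congruence].
      * intros x; split.
        -- intros Hx. destruct (eqd x mm); [left; auto|right].
           apply (Permutation_in _ HRp). apply filter_In; split; auto. destruct (eqd x mm); congruence.
        -- intros [<-|Hx]; auto. apply (Permutation_in _ (Permutation_sym HRp)) in Hx.
           apply filter_In in Hx; tauto.
    + constructor; auto. apply Forall_forall. intros x Hx.
      apply (Permutation_in _ (Permutation_sym HRp)) in Hx. apply filter_In in Hx.
      destruct Hx as [Hx Hne2]. specialize (Hmin x Hx).
      destruct (eqd x mm); [discriminate|].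
      assert (F mm <> F x) by (intros E2; apply n; symmetry; apply Hinj; auto). lia.
Qed.

End Mir.


Definition Tr := (nat * nat * nat)%type.
Definition t1 (T : Tr) := fst (fst T).
Definition t2 (T : Tr) := snd (fst T).
Definition t3 (T : Tr) := snd T.

Fixpoint grd (D : nat) (l : list nat) : list Tr :=
  match l with
  | a :: ((b :: (c :: rest)) as l') => if c - a <=? D then (a,b,c) :: grd D rest else grd D l'
  | _ => []
  end.

Lemma grd_eq : forall D a b c rest, grd D (a::b::c::rest) =
  if c - a <=? D then (a,b,c) :: grd D rest else grd D (b::c::rest).
Proof. reflexivity. Qed.

Lemma len_ind : forall (P : list nat -> Prop),
  (forall l, (forall l', length l' < length l -> P l') -> P l) -> forall l, P l.
Proof.
  intros P H l. remember (length l) as k eqn:E. revert l E.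
  induction k as [k IH] using lt_wf_ind. intros l E. apply H. intros l' Hl. subst. eapply IH; eauto.
Qed.

Lemma grd_G1 : forall D l, StronglySorted lt l -> forall T, In T (grd D l) ->
  t1 T < t2 T /\ t2 T < t3 T /\ t3 T <= t1 T + D /\ In (t1 T) l /\ In (t2 T) l /\ In (t3 T) l.
Proof.
  intros D. apply (len_ind (fun l => StronglySorted lt l -> forall T, In T (grd D l) -> _)).
  intros l IH Hs T HT.
  destruct l as [|a [|b [|c rest]]]; simpl in HT; try contradiction.
  assert (Hs1 := Hs). inversion Hs1 as [|? ? Hs2 Fa]; subst.
  inversion Hs2 as [|? ? Hs3 Fb]; subst. inversion Hs3 as [|? ? Hs4 Fc]; subst.
  rewrite Forall_forall in Fa, Fb, Fc.
  destruct (Nat.leb_spec (c - a) D).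
  - destruct HT as [<-|HT].
    + unfold t1, t2, t3; simpl. assert (a < b) by (apply Fa; simpl; auto).
      assert (b < c) by (apply Fb; simpl; auto). repeat split; auto; lia.
    + destruct (IH rest ltac:(simpl; lia) Hs4 T HT) as [? [? [? [? [? ?]]]]].
      repeat split; auto; simpl; auto 10.
  - destruct (IH (b::c::rest) ltac:(simpl; lia) Hs2 T HT) as [? [? [? [? [? ?]]]]].
    repeat split; auto; simpl in *; auto 10.
Qed.

Lemma grd_G2 : forall D l, StronglySorted lt l -> StronglySorted (fun T T' => t3 T < t1 T') (grd D l).
Proof.
  intros D. apply (len_ind (fun l => StronglySorted lt l -> _)).
  intros l IH Hs.
  destruct l as [|a [|b [|c rest]]]; try (simpl; constructor). rewrite grd_eq.
  assert (Hs1 := Hs). inversion Hs1 as [|? ? Hs2 Fa]; subst.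
  inversion Hs2 as [|? ? Hs3 Fb]; subst. inversion Hs3 as [|? ? Hs4 Fc]; subst.
  rewrite Forall_forall in Fc.
  destruct (Nat.leb_spec (c - a) D).
  - constructor; [apply IH; auto; simpl; lia|].
    apply Forall_forall. intros T HT. destruct (grd_G1 D rest Hs4 T HT) as [? [? [? [? ?]]]].
    unfold t3 at 1; simpl. apply Fc; auto.
  - apply IH; auto; simpl; lia.
Qed.

Definition Epot (n : nat) (l : list nat) := match l with a :: b :: _ => (n - a) + (n - b) | _ => 0 end.

Lemma grd_G3 : forall D n l, StronglySorted lt l -> (forall x, In x l -> x <= n) ->
  (D+1) * (length l - 3 * length (grd D l) - 2) <= Epot n l.
Proof.
  intros D n. apply (len_ind (fun l => StronglySorted lt l -> (forall x, In x l -> x <= n) -> _)).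
  intros l IH Hs Hn.
  destruct l as [|a [|b [|c rest]]]; try (simpl; lia). rewrite grd_eq.
  assert (Hs1 := Hs). inversion Hs1 as [|? ? Hs2 Fa]; subst.
  inversion Hs2 as [|? ? Hs3 Fb]; subst. inversion Hs3 as [|? ? Hs4 Fc]; subst.
  rewrite Forall_forall in Fa, Fb, Fc.
  assert (Hab : a < b) by (apply Fa; simpl; auto).
  assert (Hbc : b < c) by (apply Fb; simpl; auto).
  assert (Hcn : c <= n) by (apply Hn; simpl; auto).
  destruct (Nat.leb_spec (c - a) D).
  - cbn [length]. specialize (IH rest ltac:(simpl; lia) Hs4 ltac:(intros; apply Hn; simpl; auto)).
    replace (S (S (S (length rest))) - 3 * S (length (grd D rest)) - 2)
      with (length rest - 3 * length (grd D rest) - 2) by lia.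
    eapply Nat.le_trans; [exact IH|].
    destruct rest as [|d [|e r]]; simpl; try lia.
    assert (c < d) by (apply Fc; simpl; auto). assert (d < e).
    { inversion Hs4 as [|? ? _ Fd]; subst. rewrite Forall_forall in Fd. apply Fd; simpl; auto. }
    lia.
  - specialize (IH (b::c::rest) ltac:(simpl; lia) Hs2 ltac:(intros; apply Hn; simpl; auto)).
    cbn [length] in *. cbn [Epot] in *.
    set (G := length (grd D (b :: c :: rest))) in *.
    assert (HX : S (S (S (length rest))) - 3 * G - 2 <= 1 + (S (S (length rest)) - 3 * G - 2)) by lia.
    eapply Nat.le_trans; [apply Nat.mul_le_mono_l; exact HX|].
    rewrite Nat.mul_add_distr_l. lia.
Qed.

Lemma Epot_bound : forall n l, (forall x, In x l -> 1 <= x) -> Epot n l <= 2 * (n - 1).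
Proof. intros n l H. destruct l as [|a [|b r]]; simpl; try lia.
  assert (1 <= a) by (apply H; simpl; auto). assert (1 <= b) by (apply H; simpl; auto). lia. Qed.


Lemma Tr_eq_dec : forall x y : Tr, {x = y} + {x <> y}.
Proof. decide equality; try decide equality; apply Nat.eq_dec. Qed.

Lemma in_firstn : forall {X} k (l : list X) x, In x (firstn k l) -> In x l.
Proof. intros X k l x H. rewrite <- (firstn_skipn k l). apply in_or_app; auto. Qed.

Lemma NoDup_firstn' : forall {X} k (l : list X), NoDup l -> NoDup (firstn k l).
Proof. intros X k l H. rewrite <- (firstn_skipn k l) in H. eapply NoDup_app_remove_r; eauto. Qed.

Lemma SS_filter : forall {X} (R : X -> X -> Prop) h l, StronglySorted R l -> StronglySorted R (filter h l).
Proof.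
  intros X R h l H; induction H; simpl; [constructor|]. destruct (h a); auto.
  constructor; auto. rewrite Forall_forall in *. intros y Hy. apply filter_In in Hy. apply H0; tauto.
Qed.

Lemma SS_seq : forall k a, StronglySorted lt (seq a k).
Proof.
  induction k; intros a; simpl; constructor; auto. apply Forall_forall. intros y Hy.
  apply in_seq in Hy; lia.
Qed.

Lemma SS_map : forall {X Y} (R : Y -> Y -> Prop) (h : X -> Y) l,
  StronglySorted (fun x y => R (h x) (h y)) l -> StronglySorted R (map h l).
Proof.
  intros X Y R h l H; induction H; simpl; constructor; auto.
  rewrite Forall_forall in *. intros y Hy. apply in_map_iff in Hy. destruct Hy as [z [<- Hz]]. auto.
Qed.

Lemma SS_impl_In : forall {X} (R R' : X -> X -> Prop) l,
  (forall x y, In x l -> In y l -> R x y -> R' x y) -> StronglySorted R l -> StronglySorted R' l.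
Proof.
  intros X R R' l Himp H; induction H; constructor.
  - apply IHStronglySorted. intros; apply Himp; simpl; auto.
  - rewrite Forall_forall in *. intros y Hy. apply Himp; simpl; auto.
Qed.

Lemma SS_cases : forall {X} (R : X -> X -> Prop) l x y, StronglySorted R l -> In x l -> In y l -> x <> y ->
  R x y \/ R y x.
Proof.
  intros X R l x y H; induction H; intros Hx Hy Hne; [contradiction|].
  rewrite Forall_forall in H0.
  destruct Hx as [<-|Hx], Hy as [<-|Hy]; auto; congruence.
Qed.

Lemma SS_NoDup : forall {X} (R : X -> X -> Prop) l, (forall x, ~ R x x) -> StronglySorted R l -> NoDup l.
Proof.
  intros X R l Hirr H; induction H; constructor; auto.
  intros Hin. rewrite Forall_forall in H0. apply (Hirr a). auto.
Qed.

Definition memb (v : nat) (l : list nat) := existsb (Nat.eqb v) l.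
Lemma memb_In : forall v l, memb v l = true <-> In v l.
Proof.
  intros v l. unfold memb. rewrite existsb_exists. split.
  - intros [x [Hx E]]. apply Nat.eqb_eq in E; subst; auto.
  - intros H; exists v; split; auto; apply Nat.eqb_refl.
Qed.

Definition mem (i : nat) (T : Tr) := match i with 0 => t1 T | 1 => t2 T | _ => t3 T end.

Lemma nth_map0 : forall {X} (h : X -> nat) l i d, i < length l -> nth i (map h l) 0 = h (nth i l d).
Proof. intros. rewrite (nth_indep _ 0 (h d)) by (rewrite length_map; auto). apply map_nth. Qed.

Lemma core : forall (P : list nat) (n D c : nat),
  NoDup P -> (forall v, In v P -> 1 <= v <= n) ->
  c * (c * c) < length (grd D (filter (fun v => memb v P) (seq 1 n))) ->
  exists (a1 b1 : list nat) (Z : list Tr),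
    length a1 = S c /\ length Z = S c /\ subseq a1 P /\ subseq b1 P /\ order_iso a1 b1 /\
    (forall x, In x a1 -> ~ In x b1) /\
    (forall i, i < length a1 -> exists T, In T Z /\
        t1 T <= nth i a1 0 <= t1 T + D /\ t1 T <= nth i b1 0 <= t1 T + D).
Proof.
  intros P n D c HndP HPn HG.
  set (s := filter (fun v => memb v P) (seq 1 n)) in *.
  assert (Hss : StronglySorted lt s) by (apply SS_filter, SS_seq).
  assert (HsP : forall v, In v s -> In v P).
  { intros v Hv. apply filter_In in Hv. apply memb_In; tauto. }
  set (X := grd D s) in *.
  assert (HX1 : forall T, In T X -> t1 T < t2 T /\ t2 T < t3 T /\ t3 T <= t1 T + D /\
                 In (t1 T) P /\ In (t2 T) P /\ In (t3 T) P).
  { intros T HT. destruct (grd_G1 D s Hss T HT) as [? [? [? [? [? ?]]]]]. repeat split; auto. }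
  assert (HX2 := grd_G2 D s Hss). fold X in HX2.
  assert (HXnd : NoDup X).
  { apply (SS_NoDup (fun T T' => t3 T < t1 T' /\ t1 T' <= t3 T')).
    - intros T [H1 H2]; lia.
    - eapply SS_impl_In; [|exact HX2]. intros T T' _ HT' H. split; auto.
      destruct (HX1 T' HT') as [? [? ?]]; lia. }
  assert (Hsep : forall T T', In T X -> In T' X -> T <> T' -> t3 T < t1 T' \/ t3 T' < t1 T).
  { intros T T' HT HT' Hne. exact (SS_cases _ X T T' HX2 HT HT' Hne). }
  assert (Hmem : forall i T, In T X -> t1 T <= mem i T <= t3 T /\ In (mem i T) P).
  { intros i T HT. destruct (HX1 T HT) as [? [? [? [? [? ?]]]]].
    destruct i as [|[|i]]; simpl; repeat split; auto; lia. }
  assert (Hmemlt : forall i j T T', In T X -> In T' X -> T <> T' ->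
            (mem i T < mem j T' <-> t3 T < t1 T')).
  { intros i j T T' HT HT' Hne. destruct (Hmem i T HT) as [[? ?] _], (Hmem j T' HT') as [[? ?] _].
    destruct (Hsep T T' HT HT' Hne); split; intros; lia. }
  set (pf := fun i T => idx (mem i T) P).
  assert (Hinj : forall i, injon Tr (pf i) X).
  { intros i T T' HT HT' E. unfold pf in E. apply idx_inj in E; try apply Hmem; auto.
    destruct (Tr_eq_dec T T') as [|Hne]; auto. exfalso.
    pose proof (proj2 (Hmemlt i i T T' HT HT' Hne)). pose proof (proj2 (Hmemlt i i T' T HT' HT (not_eq_sym Hne))).
    destruct (Hsep T T' HT HT' Hne) as [H1|H1]; [specialize (H H1)|specialize (H0 H1)]; lia. }
  (* Erdos-Szekeres, twice *)
  assert (HES : exists Z0 mu mv, NoDup Z0 /\ incl Z0 X /\ S c <= length Z0 /\ mu <> mv /\ mu <= 2 /\ mv <= 2 /\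
             chainP Tr (pf mu) (pf mv) Z0).
  { destruct (mirsky Tr Tr_eq_dec (pf 0) (pf 1) (c*c) c X HXnd (Hinj 0) (Hinj 1) HG)
      as [Y [HYnd [HYX [[HYl HYc]|[HYl HYa]]]]].
    - exists Y, 0, 1; repeat split; auto.
    - assert (HinjY : forall i, injon Tr (pf i) Y) by (intros i a b Ha Hb; apply Hinj; auto).
      destruct (mirsky Tr Tr_eq_dec (pf 0) (pf 2) c c Y HYnd (HinjY 0) (HinjY 2) ltac:(lia))
        as [Z [HZnd [HZY [[HZl HZc]|[HZl HZa]]]]].
      + exists Z, 0, 2; repeat split; auto. intros a Ha; apply HYX, HZY; auto.
      + exists Z, 1, 2; repeat split; auto. intros a Ha; apply HYX, HZY; auto.
        intros x y Hx Hy Hxy.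
        destruct (Nat.lt_trichotomy (pf 0 x) (pf 0 y)) as [H|[H|H]].
        * specialize (HYa x y (HZY x Hx) (HZY y Hy) H). lia.
        * assert (x = y) by (apply (HinjY 0); auto). subst; lia.
        * apply (HZa y x Hy Hx H). }
  destruct HES as [Z0 [mu [mv [HZ0nd [HZ0X [HZ0l [Hmumv [Hmu [Hmv HZ0c]]]]]]]]].
  set (Z := firstn (S c) Z0).
  assert (HZnd : NoDup Z) by (apply NoDup_firstn'; auto).
  assert (HZX : incl Z X) by (intros a Ha; apply HZ0X; eapply in_firstn; eauto).
  assert (HZl : length Z = S c) by (apply firstn_length_le; auto).
  assert (HZc : chainP Tr (pf mu) (pf mv) Z).
  { intros x y Hx Hy; apply HZ0c; eapply in_firstn; eauto. }
  destruct (sort_ex Tr Tr_eq_dec (pf mu) (pf mu) (pf mu) Z HZnd) as [Zs [HZp HZs]].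
  { intros a b Ha Hb; apply Hinj; auto. }
  assert (HZsZ : forall T, In T Zs <-> In T Z).
  { intros T; split; apply Permutation_in; auto. apply Permutation_sym; auto. }
  assert (HZsX : forall T, In T Zs -> In T X) by (intros T H; apply HZX, HZsZ; auto).
  exists (map (mem mu) Zs), (map (mem mv) Zs), Z.
  assert (HlZs : length Zs = S c) by (rewrite <- (Permutation_length HZp); auto).
  split; [rewrite length_map; auto|]. split; auto. split; [|split; [|split; [|split]]].
  - apply sorted_pos_subseq.
    + intros x Hx. apply in_map_iff in Hx. destruct Hx as [T [<- HT]]. apply Hmem; auto.
    + apply SS_map. exact HZs.
  - apply sorted_pos_subseq.
    + intros x Hx. apply in_map_iff in Hx. destruct Hx as [T [<- HT]]. apply Hmem; auto.
    + apply SS_map. eapply SS_impl_In; [|exact HZs]. intros x y Hx Hy H.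
      apply HZc; auto; apply HZsZ; auto.
  - split; [rewrite !length_map; auto|]. intros i j Hi Hj. rewrite length_map in Hi, Hj.
    set (d := (0,0,0) : Tr).
    rewrite !(nth_map0 _ _ _ d) by auto.
    assert (Hi' : In (nth i Zs d) Zs) by (apply nth_In; auto).
    assert (Hj' : In (nth j Zs d) Zs) by (apply nth_In; auto).
    destruct (Tr_eq_dec (nth i Zs d) (nth j Zs d)) as [E|Hne].
    + rewrite E. split; intros; lia.
    + rewrite !Hmemlt; auto; tauto.
  - intros x Hx Hy. apply in_map_iff in Hx, Hy. destruct Hx as [T [<- HT]], Hy as [T' [E HT']].
    destruct (Tr_eq_dec T' T) as [->|Hne].
    + destruct (HX1 T (HZsX T HT)) as [? [? _]].
      destruct mu as [|[|mu]], mv as [|[|mv]]; simpl in E; try lia.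
    + destruct (Hsep T T' (HZsX T HT) (HZsX T' HT')) as [H|H]; [congruence| |].
      * pose proof (proj2 (Hmemlt mu mv T T' (HZsX T HT) (HZsX T' HT') ltac:(congruence)) H). lia.
      * pose proof (proj2 (Hmemlt mv mu T' T (HZsX T' HT') (HZsX T HT) Hne) H). lia.
  - intros i Hi. rewrite length_map in Hi. set (d := (0,0,0) : Tr).
    exists (nth i Zs d). rewrite !(nth_map0 _ _ _ d) by auto.
    assert (Hi' : In (nth i Zs d) Zs) by (apply nth_In; auto).
    split; [apply HZsZ; auto|].
    destruct (Hmem mu _ (HZsX _ Hi')) as [? _], (Hmem mv _ (HZsX _ Hi')) as [? _].
    destruct (HX1 _ (HZsX _ Hi')) as [? [? [? _]]]. lia.
Qed.

Open Scope R_scope.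

Lemma reals_setup (n : nat) (m : R) : (0 < n)%nat -> 7 * Rpower (INR n) (3/5) <= m -> m <= INR n ->
  let x := Rpower (INR n) (1/5) in
  Rpower (INR n) (2/5) = x*x /\ Rpower (INR n) (3/5) = x*x*x /\ INR n = x*x*x*x*x /\ 0 < x /\ 7 <= x*x.
Proof.
  intros Hn H1 H2 x.
  assert (Hn' : 0 < INR n) by (apply lt_0_INR; auto).
  assert (E2 : Rpower (INR n) (2/5) = x*x).
  { unfold x. rewrite <- Rpower_plus. f_equal. field. }
  assert (E3 : Rpower (INR n) (3/5) = x*x*x).
  { unfold x. rewrite <- !Rpower_plus. f_equal. field. }
  assert (E5 : INR n = x*x*x*x*x).
  { unfold x. rewrite <- !Rpower_plus. replace (1/5+1/5+1/5+1/5+1/5) with 1 by field.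
    rewrite Rpower_1; auto; lra. }
  assert (Hx : 0 < x) by (unfold x, Rpower; destruct (Rlt_le_dec 0 (INR n)); [apply exp_pos|lra]).
  repeat split; auto.
  rewrite E3, E5 in *.
  assert (7 * (x*x*x) <= (x*x) * (x*x*x)) by lra.
  assert (0 < x*x*x) by (repeat apply Rmult_lt_0_compat; auto).
  apply Rmult_le_reg_r with (x*x*x); auto; lra.
Qed.

Lemma floor_ex (r : R) : 0 <= r -> exists k : nat, INR k <= r < INR k + 1.
Proof.
  intros Hr. destruct (archimed r) as [H1 H2].
  assert (Hu : (0 <= up r - 1)%Z).
  { assert (0 < IZR (up r)) by lra. apply lt_IZR in H. lia. }
  exists (Z.to_nat (up r - 1)). rewrite INR_IZR_INZ, Z2Nat.id by auto.
  rewrite minus_IZR. simpl. lra.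
Qed.

Lemma budget (x : R) (c D n q : nat) : 0 < x -> 7 <= x*x -> INR c <= x -> INR D <= x*x -> x*x < INR D + 1 ->
  INR n = x*x*x*x*x -> ((D+1)*q <= 2*n)%nat -> 
  INR (3*(c*(c*c)+1)+2+q + S c * (D+1))%nat <= 7*(x*x*x).
Proof.
  intros Hx H7 Hc HD HD' En Hq.
  apply le_INR in Hq. rewrite !mult_INR, plus_INR in Hq. simpl in Hq.
  assert (Hq2 : INR q <= 2*(x*x*x)).
  { assert (0 <= INR q) by apply pos_INR.
    assert (x*x*INR q <= 2 * INR n) by nra.
    rewrite En in H0. assert (0 < x*x) by nra. nra. }
  rewrite !plus_INR, !mult_INR, !plus_INR, !mult_INR, S_INR. replace (INR 3) with 3 by (simpl; lra). replace (INR 2) with 2 by (simpl; lra). replace (INR 1) with 1 by (simpl; lra).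
  assert (0 <= INR c) by apply pos_INR.
  assert (INR c * (INR c * INR c) <= x*(x*x)).
  { apply Rmult_le_compat; auto; try nra. }
  assert ((INR c + 1) * (INR D + 1) <= (x+1)*(x*x+1)) by (apply Rmult_le_compat; try nra; apply pos_INR).
  assert (x*x*x >= x*x + x + 6) by nra.
  rewrite S_INR. nra.
Qed.


Lemma Permutation_filter' : forall (f : nat -> bool) l l', Permutation l l' -> Permutation (filter f l) (filter f l').
Proof.
  intros f l l' H; induction H; simpl; auto.
  - destruct (f x); auto.
  - destruct (f x), (f y); auto. apply perm_swap.
  - eapply perm_trans; eauto.
Qed.

Lemma filter_split_len : forall (h : nat -> bool) l, length l = (length (filter h l) + length (filter (fun x => negb (h x)) l))%nat.
Proof. intros h l; induction l; simpl; auto. destruct (h a); simpl; lia. Qed.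

Lemma flat_map_seq_len : forall (Z : list Tr) D, length (flat_map (fun T => seq (t1 T) (D+1)) Z) = (length Z * (D+1))%nat.
Proof. intros Z D; induction Z; simpl; auto. rewrite length_app, length_seq, IHZ. lia. Qed.

Lemma filter_nil' : forall (f : nat -> bool) l, (forall v, In v l -> f v = false) -> filter f l = [].
Proof. intros f l H; induction l; simpl; auto. rewrite H by (simpl; auto). apply IHl; intros; apply H; simpl; auto. Qed.

Lemma close_nat : forall a b D d, Rabs (INR a - INR b) <= d -> d < INR D + 1 -> (a <= b + D /\ b <= a + D)%nat.
Proof.
  intros a b D d H1 H2. split; apply Nat.nlt_ge; intros Hlt; unfold lt in Hlt; apply le_INR in Hlt;
  rewrite S_INR, plus_INR in Hlt.
  - assert (INR a - INR b <= Rabs (INR a - INR b)) by apply Rle_abs. lra.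
  - rewrite Rabs_minus_sym in H1. assert (INR b - INR a <= Rabs (INR b - INR a)) by apply Rle_abs. lra.
Qed.

Lemma nat_close_R : forall a b D, (a <= b + D)%nat -> (b <= a + D)%nat -> Rabs (INR a - INR b) <= INR D.
Proof.
  intros a b D H1 H2. apply le_INR in H1, H2. rewrite plus_INR in H1, H2.
  unfold Rabs; destruct (Rcase_abs _); lra.
Qed.

Lemma forallb_false_ex : forall {X} (f : X -> bool) l, forallb f l = false -> exists y, In y l /\ f y = false.
Proof.
  intros X f l; induction l; simpl; intros H; [discriminate|].
  destruct (f a) eqn:E; simpl in H.
  - destruct (IHl H) as [y [Hy Hf]]; exists y; auto.
  - exists a; auto.
Qed.

Theorem mainTheorem3 (n : nat) (m : R) (T : nat) :
  (0 < n)%nat ->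
  7 * Rpower (INR n) (3/5) <= m -> m <= INR n ->
  (forall Sigma' : list nat, subset_of_n n Sigma' ->
     INR (length Sigma') >= m - 7 * Rpower (INR n) (3/5) ->
     forall p, Permutation Sigma' p -> has_close_twins_len_ge n p (INR T)) ->
  forall Sigma : list nat, subset_of_n n Sigma ->
    INR (length Sigma) >= m ->
    forall p, Permutation Sigma p ->
      has_close_twins_len_ge n p (INR T + Rpower (INR n) (1/5)).
Proof.
  intros Hn Hm1 Hm2 Hyp Sigma HSig HlSig p Hp.
  destruct (reals_setup n m Hn Hm1 Hm2) as [E2 [E3 [E5 [Hx H7]]]].
  set (x := Rpower (INR n) (1/5)) in *.
  destruct (floor_ex (x*x) ltac:(nra)) as [D [HD1 HD2]].
  destruct (floor_ex x ltac:(lra)) as [c [Hc1 Hc2]].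
  set (q := ((2*(n-1)) / (D+1))%nat).
  assert (Hq : ((D+1)*q <= 2*n)%nat).
  { unfold q. pose proof (Nat.Div0.mul_div_le (2*(n-1)) (D+1)). lia. }
  set (t := (3*(c*(c*c)+1)+2+q)%nat).
  pose proof (budget x c D n q Hx H7 Hc1 HD1 HD2 E5 Hq) as Hbud. fold t in Hbud.
  assert (Hndp : NoDup p) by (eapply Permutation_NoDup; [exact Hp| apply HSig]).
  assert (Hpn : forall v, In v p -> (1 <= v <= n)%nat).
  { intros v Hv; apply HSig; apply (Permutation_in _ (Permutation_sym Hp)); auto. }
  assert (Hlp : length p = length Sigma) by (symmetry; apply Permutation_length; auto).
  assert (Ht : (t <= length p)%nat).
  { apply INR_le. rewrite Hlp. rewrite plus_INR in Hbud.
    assert (0 <= INR (S c * (D + 1))) by apply pos_INR. rewrite E3 in Hm1. lra. }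
  set (P := firstn t p).
  assert (HlP : length P = t) by (apply firstn_length_le; auto).
  assert (HndP : NoDup P) by (apply NoDup_firstn'; auto).
  assert (HPn : forall v, In v P -> (1 <= v <= n)%nat) by (intros; apply Hpn; eapply in_firstn; eauto).
  set (s := filter (fun v => memb v P) (seq 1 n)).
  assert (Hins : forall v, In v s <-> In v P).
  { intros v; unfold s; rewrite filter_In, memb_In, in_seq. split; [tauto|].
    intros H; split; auto. specialize (HPn v H). lia. }
  assert (Hls : length s = t).
  { rewrite <- HlP. apply Permutation_length. apply NoDup_Permutation; auto.
    apply NoDup_filter, seq_NoDup. }
  assert (HG : (c*(c*c) < length (grd D s))%nat).
  { assert (Hss : StronglySorted lt s) by (apply SS_filter, SS_seq).
    pose proof (grd_G3 D n s Hss ltac:(intros v Hv; apply Hins, HPn in Hv; lia)) as H1.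
    pose proof (Epot_bound n s ltac:(intros v Hv; apply Hins, HPn in Hv; lia)) as H2.
    set (G := length (grd D s)) in *. rewrite Hls in H1.
    assert (H3 : ((t - 3*G - 2) <= q)%nat).
    { unfold q. apply Nat.div_le_lower_bound; lia. }
    unfold t in H3. lia. }
  destruct (core P n D c HndP HPn HG) as [a1 [b1 [Z [Hla1 [HlZ [Hsa1 [Hsb1 [Hoi1 [Hdis1 Hwin]]]]]]]]].
  set (keep := fun v => negb (memb v P) && forallb (fun T => negb ((t1 T <=? v)%nat && (v <=? t1 T + D)%nat)) Z).
  assert (Hkeep : forall v, keep v = true -> ~ In v P /\ forall T, In T Z -> (v < t1 T \/ t1 T + D < v)%nat).
  { intros v Hk. unfold keep in Hk. apply andb_true_iff in Hk. destruct Hk as [Hk1 Hk2].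
    split.
    - intros Hin. apply memb_In in Hin. rewrite Hin in Hk1. discriminate.
    - intros T0 HT0. rewrite forallb_forall in Hk2. specialize (Hk2 T0 HT0).
      apply negb_true_iff in Hk2. apply andb_false_iff in Hk2.
      destruct Hk2 as [Hk2|Hk2]; [apply Nat.leb_gt in Hk2|apply Nat.leb_gt in Hk2]; lia. }
  set (Sig' := filter keep Sigma). set (p' := filter keep p).
  assert (Hperm' : Permutation Sig' p') by (apply Permutation_filter'; auto).
  assert (Hsub' : subset_of_n n Sig').
  { split; [apply NoDup_filter, HSig|]. intros v Hv. apply filter_In in Hv. apply HSig; tauto. }
  assert (Hlen' : (length Sigma <= length Sig' + (t + S c * (D+1)))%nat).
  { rewrite (filter_split_len keep Sigma). fold Sig'. apply Nat.add_le_mono_l.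
    rewrite <- HlP, <- HlZ, <- flat_map_seq_len, <- length_app.
    apply NoDup_incl_length; [apply NoDup_filter, HSig|].
    intros v Hv. apply filter_In in Hv. destruct Hv as [HvS Hv].
    apply negb_true_iff in Hv. apply in_or_app. unfold keep in Hv.
    apply andb_false_iff in Hv. destruct Hv as [Hv|Hv].
    - left. apply negb_false_iff, memb_In in Hv; auto.
    - right. apply forallb_false_ex in Hv. destruct Hv as [T0 [HT0 Hv]].
      apply negb_false_iff, andb_true_iff in Hv. destruct Hv as [Hv1 Hv2].
      apply Nat.leb_le in Hv1, Hv2. apply in_flat_map. exists T0; split; auto.
      apply in_seq. lia. }
  assert (HlenR : INR (length Sig') >= m - 7 * Rpower (INR n) (3/5)).
  { assert (Hb2 : INR t + INR (S c * (D+1)) <= 7*(x*x*x)) by (rewrite <- plus_INR; exact Hbud).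
    rewrite E3. apply le_INR in Hlen'. rewrite !plus_INR in Hlen'. lra. }
  destruct (Hyp Sig' Hsub' HlenR p' Hperm') as [a2 [b2 [[[Hsa2 [Hsb2 [Hoi2 Hdis2]]] Hcl2] Hla2]]].
  assert (Hp'eq : p' = filter keep (skipn t p)).
  { unfold p'. rewrite <- (firstn_skipn t p) at 1. rewrite filter_app.
    fold P. rewrite (filter_nil' keep P); auto.
    intros v Hv. destruct (keep v) eqn:E; auto. exfalso. apply (proj1 (Hkeep v E)); auto. }
  assert (Hinp' : forall v, In v p' -> keep v = true).
  { intros v Hv. apply filter_In in Hv; tauto. }
  assert (Ha2p' : forall v, In v a2 -> keep v = true) by (intros v Hv; apply Hinp', (subseq_in a2); auto).
  assert (Hb2p' : forall v, In v b2 -> keep v = true) by (intros v Hv; apply Hinp', (subseq_in b2); auto).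
  assert (Ha1P : forall v, In v a1 -> In v P) by (intros v Hv; apply (subseq_in a1); auto).
  assert (Hb1P : forall v, In v b1 -> In v P) by (intros v Hv; apply (subseq_in b1); auto).
  destruct Hoi1 as [Hlb1 Hoi1'].
  assert (Hoi1 : order_iso a1 b1) by (split; auto).
  exists (a1 ++ a2), (b1 ++ b2). split; [split; [split; [|split; [|split]]|]|].
  - rewrite <- (firstn_skipn t p). apply subseq_app; auto.
    eapply subseq_trans; [exact Hsa2|]. rewrite Hp'eq. apply subseq_filter.
  - rewrite <- (firstn_skipn t p). apply subseq_app; auto.
    eapply subseq_trans; [exact Hsb2|]. rewrite Hp'eq. apply subseq_filter.
  - apply order_iso_app; auto.
    intros i j Hi Hj.
    destruct (Hwin i Hi) as [T0 [HT0 [Hw1 Hw2]]].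
    assert (Hj' : (j < length b2)%nat) by (destruct Hoi2 as [L _]; lia).
    assert (Hz := Hkeep _ (Ha2p' _ (nth_In a2 0%nat Hj))).
    assert (Hz' := Hkeep _ (Hb2p' _ (nth_In b2 0%nat Hj'))).
    destruct Hz as [_ Hz], Hz' as [_ Hz']. specialize (Hz T0 HT0). specialize (Hz' T0 HT0).
    specialize (Hcl2 j Hj). rewrite E2 in Hcl2.
    destruct (close_nat _ _ D _ Hcl2 HD2) as [Hc3 Hc4].
    lia.
  - intros v Hv Hv'. apply in_app_or in Hv, Hv'.
    destruct Hv as [Hv|Hv], Hv' as [Hv'|Hv'].
    + apply (Hdis1 v); auto.
    + apply (proj1 (Hkeep v (Hb2p' v Hv'))). auto.
    + apply (proj1 (Hkeep v (Ha2p' v Hv))). auto.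
    + apply (Hdis2 v); auto.
  - intros i Hi. rewrite length_app in Hi. rewrite E2.
    destruct (Nat.lt_ge_cases i (length a1)) as [Hi1|Hi1].
    + rewrite !app_nth1 by lia.
      destruct (Hwin i Hi1) as [T0 [HT0 [Hw1 Hw2]]].
      eapply Rle_trans; [apply (nat_close_R _ _ D); lia|]. lra.
    + rewrite !app_nth2 by lia. rewrite Hlb1. rewrite E2 in Hcl2. apply Hcl2. lia.
  - rewrite length_app, plus_INR, Hla1, S_INR. lra.
Qed.
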